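(* Let $\mathcal{U}=[k]$ be finite, let $\{\mathbf{p}_u\}_{u\in\mathcal{U}}$ be a probability table with every $\mathbf{p}_u\in(0,1)^n$ and $\sum_ip_u^{(i)}=1$, and let $d$ be a probability distribution on $\mathcal{U}$. Then the vector $(f_d(C^{(i)},C^{(j)}))_{i<j}\in\mathbb{R}^{n(n-1)/2}$ lies in $\mathrm{Co}(\mathcal{H_R})$, the interior of the convex hull of the ranking vectors.
   Context: $f_d(C^{(i)},C^{(j)})=\sum_u d(u)\,p_u^{(i)}/(p_u^{(i)}+p_u^{(j)})$ are the expert graph weights. For a permutation $r=(r_1,\dots,r_n)$ of $[n]$, the ranking vector has coordinates $f_r(C^{(i)},C^{(j)})$, $i<j$, where $f_r(C^{(r_a)},C^{(r_b)})=1$ if $a<b$ and $0$ if $a>b$. $\mathrm{Co}(\mathcal{H_R})$ is the open convex hull (interior of the convex hull, the linear ordering polytope) of the $n!$ ranking vectors in $\mathbb{R}^{n(n-1)/2}$. *)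

(* Defs.v *)
From mathcomp Require Import all_boot all_order all_algebra all_fingroup.
Set Implicit Arguments. Unset Strict Implicit. Unset Printing Implicit Defensive.
Import Order.TTheory GRing.Theory Num.Theory.
Local Open Scope ring_scope.

(* Index set of the coordinates of R^{n(n-1)/2}: pairs (i,j) of candidates with i < j. *)
Definition pairs (n : nat) := {ij : 'I_n * 'I_n | (ij.1 < ij.2)%N}.

(* Ranking vector of the ranking r = (r_1,...,r_n), encoded as the permutation
   s : position a |-> candidate r_a.  Coordinate (i,j) is 1 iff candidate i is
   ranked before candidate j, i.e. s^-1 i < s^-1 j. *)
Definition rank_vec (R : numDomainType) (n : nat) (s : {perm 'I_n}) (e : pairs n) : R :=
  if ((s^-1)%g (val e).1 < (s^-1)%g (val e).2)%N then 1 else 0.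

Definition in_rank_hull (R : numDomainType) (n : nat) (x : pairs n -> R) : Prop :=
  exists lam : {perm 'I_n} -> R,
    [/\ forall s, 0 <= lam s,
        \sum_s lam s = 1
      & forall e, x e = \sum_s lam s * rank_vec R s e].

(* x lies in the interior of that convex hull (product/sup-norm topology on R^{n(n-1)/2}). *)
Definition in_open_rank_hull (R : numDomainType) (n : nat) (x : pairs n -> R) : Prop :=
  exists2 eps : R, 0 < eps &
    forall y : pairs n -> R, (forall e, `|y e - x e| < eps) -> in_rank_hull y.

Definition fd (R : numFieldType) (n k : nat) (d : 'I_k -> R) (p : 'I_k -> 'I_n -> R)
  (e : pairs n) : R :=
  \sum_(u < k) d u * p u (val e).1 / (p u (val e).1 + p u (val e).2).

(* Main.v *)
Require Import Defs.
From mathcomp Require Import all_boot all_order all_algebra all_fingroup.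
From mathcomp Require Import ring lra zify.
Import Order.TTheory GRing.Theory Num.Theory.
Local Open Scope ring_scope.
Set Implicit Arguments. Unset Strict Implicit.
Section PL.
Variables (R : realFieldType) (n : nat) (q : 'I_n -> R).
Hypothesis qpos : forall i, 0 < q i.

Definition ssum (l : seq 'I_n) : R := \sum_(a <- l) q a.
Fixpoint plw (l : seq 'I_n) : R := if l is a :: t then q a / ssum (a :: t) * plw t else 1.

Lemma ssum_gt0 a l : 0 < ssum (a :: l).
Proof.
rewrite /ssum big_cons; apply: ltr_pwDl (qpos a) _.
by apply: sumr_ge0 => i _; apply: ltW.
Qed.

Lemma plw_gt0 l : 0 < plw l.
Proof.
elim: l => [|a l IH] /=; first exact: ltr01.
by rewrite mulr_gt0 // divr_gt0 // ssum_gt0.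
Qed.

Lemma perms_sum (S : seq 'I_n) (F : seq 'I_n -> R) : uniq S -> (0 < size S)%N ->
  \sum_(t <- permutations S) F t = \sum_(x <- S) \sum_(t <- permutations (rem x S)) F (x :: t).
Proof.
move=> uS hS; rewrite (perm_big _ (permutationsE hS)) undup_id //.
by rewrite big_allpairs_dep.
Qed.

Lemma ssum_cons x S t : x \in S -> t \in permutations (rem x S) ->
  ssum (x :: t) = ssum S.
Proof.
move=> xS; rewrite mem_permutations => ht.
rewrite /ssum; apply: perm_big.
have h : perm_eq (x :: t) (x :: rem x S) by rewrite perm_cons.
have h2 := perm_to_rem xS; rewrite perm_sym in h2.
exact: perm_trans h h2.
Qed.

Lemma sum_plw m : forall S, size S = m -> uniq S -> \sum_(t <- permutations S) plw t = 1.
Proof.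
elim: m => [|m IH] S hs uS.
  by move/size0nil: hs => ->; rewrite /= big_seq1.
rewrite perms_sum // ?hs //.
rewrite (eq_big_seq (fun x => q x / ssum S)); last first.
  move=> x xS /=.
  rewrite (eq_big_seq (fun t => q x / ssum S * plw t)); last first.
    by move=> t ht /=; rewrite (ssum_cons xS ht).
  by rewrite -mulr_sumr IH ?mulr1 ?rem_uniq // size_rem // hs.
rewrite -mulr_suml -/(ssum S) divff //.
case: S hs {uS} => // a l _; exact: lt0r_neq0 (ssum_gt0 a l).
Qed.

Lemma sum_ind (S : seq 'I_n) (i : 'I_n) (F : 'I_n -> R) : uniq S -> i \in S ->
  \sum_(x <- S) (x == i)%:R * F x = F i.
Proof.
move=> uS iS; rewrite (bigD1_seq i) //= eqxx mul1r big1 ?addr0 //.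
by move=> x /negbTE ->; rewrite mul0r.
Qed.


Lemma sum_before m : forall S, size S = m -> uniq S -> forall i j, i != j -> i \in S -> j \in S ->
  \sum_(t <- permutations S) plw t * (index i t < index j t)%:R = q i / (q i + q j).
Proof.
elim: m => [|m IH] S hs uS i j ij iS jS.
  by move/size0nil: hs iS => ->.
set c := q i / (q i + q j).
rewrite perms_sum // ?hs //.
rewrite (eq_big_seq (fun x => q x / ssum S *
   (c + (x == i)%:R * (1 - c) - (x == j)%:R * c))); last first.
  move=> x xS /=.
  rewrite (eq_big_seq (fun t => q x / ssum S * (plw t * (index i (x :: t) < index j (x :: t))%:R)));
    last first.
    by move=> t ht /=; rewrite (ssum_cons xS ht) mulrA.
  rewrite -mulr_sumr; congr (_ * _) => /=.
  have [xi|xi] := eqVneq x i.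
    subst x; rewrite (negbTE ij) /=.
    under eq_bigr do rewrite mulr1.
    rewrite (sum_plw (erefl _)) ?rem_uniq //.
    by rewrite mul0r subr0 mul1r addrC subrK.
  have [xj|xj] := eqVneq x j.
    subst x; rewrite /=.
    rewrite big1 /=; last by move=> t _; rewrite mulr0.
    by rewrite mul0r mul1r addr0 subrr.
  rewrite /= mul0r mul0r addr0 subr0.
  rewrite (eq_bigr (fun t => plw t * (index i t < index j t)%:R)); last first.
    by move=> t _; rewrite ltnS.
  apply: (IH (rem x S)) => //; first by rewrite size_rem // hs.
    exact: rem_uniq.
  by rewrite (mem_rem_uniq _ uS) inE iS andbT eq_sym.
  by rewrite (mem_rem_uniq _ uS) inE jS andbT eq_sym.
have T0 : 0 < ssum S by move: iS; case: S {hs uS jS IH} => // a l; rewrite ssum_gt0.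
rewrite (eq_big_seq (fun x => q x / ssum S * c + ((x == i)%:R * (q i / ssum S * (1 - c))
   - (x == j)%:R * (q j / ssum S * c)))); last first.
  move=> x _; case: (eqVneq x i) => [->|_]; case: (eqVneq _ j) => [->|_] /=; ring.
rewrite big_split /= sumrB.
rewrite (sum_ind (fun _ => q i / ssum S * (1 - c))) //.
rewrite (sum_ind (fun _ => q j / ssum S * c)) //.
rewrite -mulr_suml -mulr_suml -/(ssum S) divff ?lt0r_neq0 // mul1r.
have qi := qpos i; have qj := qpos j.
rewrite /c; field.
by rewrite !lt0r_neq0 // addr_gt0.
Qed.

End PL.
Section Conn.
Variables (R : realFieldType) (n : nat).
Definition lst (s : {perm 'I_n}) : seq 'I_n := map s (enum 'I_n).

Lemma lst_index s i : index i (lst s) = (s^-1)%g i.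
Proof.
rewrite /lst -{1}(permKV s i) index_map ?index_enum_ord //; exact: perm_inj.
Qed.

Lemma lst_inj : injective lst.
Proof.
move=> s t h; apply: invg_inj; apply/permP => x.
apply: val_inj; by rewrite /= -!lst_index h.
Qed.

Lemma sum_lst (F : seq 'I_n -> R) :
  \sum_(s : {perm 'I_n}) F (lst s) = \sum_(l <- permutations (enum 'I_n)) F l.
Proof.
rewrite -(big_map lst (fun _ => true) F); apply: perm_big; apply: uniq_perm.
- by rewrite map_inj_uniq ?index_enum_uniq //; exact: lst_inj.
- exact: permutations_uniq.
apply: (uniq_min_size _ _ _).2.
- by rewrite map_inj_uniq ?index_enum_uniq //; exact: lst_inj.
- move=> l /mapP [s _ ->]; rewrite mem_permutations.
  apply: uniq_perm; first by rewrite map_inj_uniq ?enum_uniq //; exact: perm_inj.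
    exact: enum_uniq.
  move=> y; rewrite mem_enum; apply/mapP; exists ((s^-1)%g y); first by rewrite mem_enum.
  by rewrite permKV.
rewrite size_map size_permutations ?enum_uniq // size_enum_ord.
by rewrite [index_enum _]unlock -enumT -cardT card_Sn.
Qed.
End Conn.
Lemma key (R : numDomainType) n (P : {perm 'I_n}) (i j a b : 'I_n) : (i < j)%N -> (a < b)%N ->
  P j = (P i).+1 :> nat ->
  ((P a < P b)%N%:R - (P (tperm i j a) < P (tperm i j b))%N%:R : R) = ((a == i) && (b == j))%:R.
Proof.
move=> hij hab Pj.
have Pinj : forall x y : 'I_n, (P x = P y :> nat) -> x = y by move=> x y /val_inj /perm_inj.
have ne : forall x y : 'I_n, x <> y -> (P x <> P y :> nat) by move=> x y h /Pinj.
case: tpermP => [ea|ea|ai aj]; case: tpermP => [eb|eb|bi bj]; subst.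
- by rewrite ltnn in hab.
- by rewrite !eqxx Pj ltnSn ltnNge leqnSn subr0.
- rewrite eqxx (_ : (b == j) = false); last by apply/eqP.
  have := ne _ _ bi; have := ne _ _ bj; rewrite Pj => h1 h2.
  by rewrite (_ : (P i < P b)%N = ((P i).+1 < P b)%N) ?subrr //; lia.
- by have := ltn_trans hab hij; rewrite ltnn.
- by rewrite ltnn in hab.
- rewrite (_ : (j == i) = false); last by apply/eqP => h; rewrite h ltnn in hij.
  have := ne _ _ bi; have := ne _ _ bj; rewrite Pj => h1 h2.
  by rewrite (_ : ((P i).+1 < P b)%N = (P i < P b)%N) ?subrr //; lia.
- rewrite (_ : (a == i) = false); last by apply/eqP.
  have := ne _ _ ai; have := ne _ _ aj; rewrite Pj => h1 h2.
  by rewrite (_ : (P a < P i)%N = (P a < (P i).+1)%N) ?subrr //; lia.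
- rewrite (_ : (a == i) = false); last by apply/eqP.
  have := ne _ _ ai; have := ne _ _ aj; rewrite Pj => h1 h2.
  by rewrite (_ : (P a < (P i).+1)%N = (P a < P i)%N) ?subrr //; lia.
- by rewrite (_ : (a == i) = false) ?subrr //; apply/eqP.
Qed.
Section Int.
Variables (R : realFieldType) (n : nat).

Definition nxt (e : pairs n) : 'I_n := Ordinal (leq_ltn_trans (valP e) (ltn_ord (val e).2)).
Definition pip (e : pairs n) : {perm 'I_n} := tperm (val e).2 (nxt e).
Definition sg (e : pairs n) : {perm 'I_n} := ((pip e)^-1)%g.
Definition tu (e : pairs n) : {perm 'I_n} := ((tperm (val e).1 (val e).2 * pip e)^-1)%g.

Lemma b2R (c : bool) : (if c then 1 else 0 : R) = c%:R.
Proof. by case: c. Qed.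

Lemma diff_vec e e' : rank_vec R (sg e) e' - rank_vec R (tu e) e' = (e' == e)%:R.
Proof.
rewrite /rank_vec /sg /tu !invgK !permM !b2R.
have Pj : pip e (val e).2 = (pip e (val e).1).+1 :> nat.
  rewrite /pip tpermL tpermD //.
  - by apply/eqP => h; have := valP e; rewrite /= h ltnn.
  - by apply/eqP => /(congr1 val) /= h; lia.
case: e Pj => [[i j] hij] /= Pj; case: e' => [[a b] hab] /=.
by rewrite (@key R n _ i j a b hij hab Pj).
Qed.

Lemma sum_ind_fin (T : finType) (t : T) (F : T -> R) : \sum_s (s == t)%:R * F s = F t.
Proof.
rewrite (bigD1 t) //= eqxx mul1r big1 ?addr0 //.
by move=> s /negbTE ->; rewrite mul0r.
Qed.

Lemma interior (x : pairs n -> R) (lam : {perm 'I_n} -> R) :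
  (forall s, 0 < lam s) -> \sum_s lam s = 1 ->
  (forall e, x e = \sum_s lam s * rank_vec R s e) -> in_open_rank_hull x.
Proof.
move=> lpos lsum hx.
set N : R := \sum_(e : pairs n) 1.
have N0 : 0 <= N by apply: sumr_ge0 => e _; exact: ler01.
set del := \prod_s lam s.
have lle1 : forall s, lam s <= 1.
  move=> s; rewrite -lsum (bigD1 s) //= lerDl; apply: sumr_ge0 => t _; exact: ltW.
have del_le : forall s, del <= lam s.
  move=> s; rewrite /del (bigD1 s) //= ler_piMr //.
  - exact: ltW.
  - by apply: prodr_ile1 => t _; rewrite ltW ?lle1.
have del_gt0 : 0 < del by apply: prodr_gt0 => s _.
have N1 : 0 < N + 1 by apply: ltr_wpDl N0 ltr01.
exists (del / (N + 1)); first by rewrite divr_gt0.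
move=> y hy.
pose z e := y e - x e.
pose D e s : R := (s == sg e)%:R - (s == tu e)%:R.
have sumD : forall e (F : {perm 'I_n} -> R), \sum_s D e s * F s = F (sg e) - F (tu e).
  move=> e F; rewrite /D.
  under eq_bigr do rewrite mulrBl.
  by rewrite sumrB !sum_ind_fin.
exists (fun s => lam s + \sum_e z e * D e s); split.
- move=> s.
  have hB : `|\sum_e z e * D e s| <= N * (del / (N + 1)).
    apply: le_trans (ler_norm_sum _ _ _) _.
    rewrite /N mulr_suml; apply: ler_sum => e _; rewrite mul1r normrM.
    have hD : `|D e s| <= 1.
      by rewrite /D; case: (s == sg e); case: (s == tu e); rewrite /= ?subrr ?subr0 ?sub0r ?normrN ?normr0 ?normr1.
    have := hy e; rewrite -/(z e) => hz.
    rewrite -[X in _ <= X]mulr1; apply: ler_pM => //; exact: ltW.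
  have := lerNnormlW hB => h.
  have hk : N * (del / (N + 1)) <= del.
    rewrite mulrA ler_pdivrMr // mulrC ler_pM2l // lerDl; exact: ler01.
  have := del_le s; lra.
- rewrite big_split /= lsum exchange_big /= big1 ?addr0 // => e _.
  rewrite -mulr_sumr (_ : \sum_i D e i = 0) ?mulr0 //.
  by have := sumD e (fun _ => 1); under eq_bigr do rewrite mulr1; rewrite subrr.
- move=> e'.
  under eq_bigr do rewrite mulrDl.
  rewrite big_split /= -hx.
  under eq_bigr do rewrite mulr_suml.
  rewrite exchange_big /=.
  under eq_bigr do (under eq_bigr do rewrite -mulrA; rewrite -mulr_sumr sumD diff_vec).
  under eq_bigr do rewrite mulrC eq_sym.
  by rewrite sum_ind_fin /z addrC subrK.
Qed.
End Int.

Unset Implicit Arguments.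

Theorem lemma11 (R : realFieldType) (n k : nat)
  (p : 'I_k -> 'I_n -> R) (d : 'I_k -> R) :
  (forall u i, 0 < p u i < 1) ->
  (forall u, \sum_(i < n) p u i = 1) ->
  (forall u, 0 <= d u) ->
  \sum_(u < k) d u = 1 ->
  in_open_rank_hull (fd d p).
Proof.
move=> hp _ hd dsum.
have qpos : forall u i, 0 < p u i by move=> u i; case/andP: (hp u i).
pose lamu u (s : {perm 'I_n}) := plw (p u) (lst s).
have lamu_gt0 : forall u s, 0 < lamu u s by move=> u s; apply: plw_gt0.
apply: (@interior R n _ (fun s => \sum_u d u * lamu u s)).
- move=> s.
  case: (pickP (fun u => 0 < d u)) => [u0 hu0|none].
    rewrite (bigD1 u0) //=; apply: ltr_pwDl; first by rewrite mulr_gt0.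
    by apply: sumr_ge0 => u _; rewrite mulr_ge0 // ltW.
  have d0 : forall u, d u = 0.
    by move=> u; apply/eqP; rewrite eq_le hd andbT leNgt none.
  by move: dsum; rewrite big1 // => /eqP; rewrite eq_sym oner_eq0.
- rewrite exchange_big /=.
  rewrite (eq_bigr (fun u => d u)) // => u _.
  rewrite -mulr_sumr /lamu (sum_lst (plw (p u))).
  by rewrite (sum_plw (qpos u) (erefl _)) ?enum_uniq ?mulr1.
- move=> e; rewrite /fd.
  apply/esym; under eq_bigr do rewrite mulr_suml.
  rewrite exchange_big /=; apply: eq_bigr => u _.
  under eq_bigr do rewrite -mulrA.
  rewrite -mulrA -mulr_sumr; congr (_ * _).
  rewrite /lamu.
  under eq_bigr do rewrite /rank_vec b2R -!lst_index.
  rewrite (sum_lst (fun l => plw (p u) l * (index (val e).1 l < index (val e).2 l)%:R)).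
  apply: (sum_before (qpos u) (erefl _)); rewrite ?enum_uniq ?mem_enum //.
  by apply/eqP => h; have := valP e; rewrite h ltnn.
Qed.
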